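(* Let $G=(V,E)$ be a finite simple undirected graph, $G_0:=G$, and let $W_1,\dots,W_r$ be distinct subsets of $V$ such that for every $t\in\{1,\dots,r\}$, $W_t$ is a clique of $G_{t-1}$ with $|W_t|\ge2$ and $G_t:=G_{t-1}\mid W_t$. Let $F_0:=STAB(G)$, $F_t:=\{x\in STAB(G)\mid x_{W_j}=1,\ j=1,\dots,t\}$, and $\mathcal S_t:=\mathcal S(G)\cap F_t$. Let $c^\top x\le d$, with $c\in\mathbb R^V$ and $d\in\mathbb R$, be a valid inequality for $STAB(G_r)$. For $t\in\{0,\dots,r\}$ define \[ f_t(x)=c^\top x+\sum_{\ell=t+1}^r\lambda^S_\ell(x_{W_\ell}-1), \] where, recursively for $\ell=r,r-1,\dots,1$, \[ \lambda^S_\ell=\max\{f_\ell(x)-d\mid x\in\mathcal S_{\ell-1},\ x_{W_\ell}=0\}, \] with the convention $\max\emptyset=0$. Then $f_t(x)\le d$ is valid for $F_t$ for every $t\in\{0,\dots,r\}$.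
   Context: For a graph $G=(V,E)$, $\mathcal S(G)\subseteq\{0,1\}^V$ is the set of characteristic vectors of stable sets of $G$, and $STAB(G)=\mathrm{conv}\,\mathcal S(G)$. For $W\subseteq V$ and $x\in\mathbb R^V$, $x_W=\sum_{v\in W}x_v$. The clique projection of a clique $W$ ($|W|\ge2$) of a graph $H=(V,E_H)$ is $H\mid W=(V,E_H\cup\{uv\notin E_H\mid u\ne v,\ W\subseteq N_H(u)\cup N_H(v)\})$, where $N_H(u)$ is the neighborhood of $u$ in $H$. *)

(* Defs.v *)
From mathcomp Require Import all_boot all_order all_algebra.
Set Implicit Arguments. Unset Strict Implicit. Unset Printing Implicit Defensive.
Import Order.TTheory GRing.Theory Num.Theory.
Local Open Scope ring_scope.

Definition simple_graph (V : finType) (e : rel V) : Prop :=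
  symmetric e /\ irreflexive e.

Section Defs.
Variables (V : finType) (R : realFieldType).

Definition nbhd (e : rel V) (u : V) : {set V} := [set w | e u w].

Definition stableb (e : rel V) (S : {set V}) : bool :=
  [forall u in S, forall v in S, ~~ e u v].
Definition is_clique (e : rel V) (W : {set V}) : Prop :=
  forall u v, u \in W -> v \in W -> u != v -> e u v.

Definition clique_proj (e : rel V) (W : {set V}) : rel V :=
  fun u v => e u v || ((u != v) && (W \subset nbhd e u :|: nbhd e v)).

Fixpoint Gseq (e : rel V) (W : nat -> {set V}) (t : nat) : rel V :=
  match t with
  | 0 => e
  | t'.+1 => clique_proj (Gseq e W t') (W t'.+1)
  end.

Definition chi (S : {set V}) : V -> R := fun v => (v \in S)%:R.

Definition xsum (x : V -> R) (W : {set V}) : R := \sum_(v in W) x v.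

Definition dotp (c x : V -> R) : R := \sum_v c v * x v.

(* STAB(G) = conv S(G): convex combinations of characteristic vectors
   of stable sets (the set S(G) is finite). *)
Definition inSTAB (e : rel V) (x : V -> R) : Prop :=
  exists w : {set V} -> R,
    [/\ forall S, 0 <= w S,
        forall S, ~~ stableb e S -> w S = 0,
        \sum_S w S = 1 &
        forall v, x v = \sum_S w S * chi S v].

Definition inF (e : rel V) (W : nat -> {set V}) (t : nat) (x : V -> R) : Prop :=
  inSTAB e x /\ forall j, (1 <= j <= t)%N -> xsum x (W j) = 1.

Definition maxS (A : {set {set V}}) (g : {set V} -> R) : R :=
  match [pick S in A] with
  | None => 0
  | Some S0 => \big[Num.max/g S0]_(S in A) g S
  end.

Definition fval (c : V -> R) (lam : nat -> R) (W : nat -> {set V}) (r t : nat)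
    (x : V -> R) : R :=
  dotp c x + \sum_(t.+1 <= l < r.+1) lam l * (xsum x (W l) - 1).

(* the family of stable sets S of G whose characteristic vector lies in
   S_{l-1} = S(G) ∩ F_{l-1} and satisfies x_{W_l} = 0 *)
Definition lam_domain (e : rel V) (W : nat -> {set V}) (l : nat) : {set {set V}} :=
  [set S | stableb e S
         & [forall j : 'I_l, (1 <= j)%N ==> (xsum (chi S) (W j) == 1)]
         && (xsum (chi S) (W l) == 0)].

End Defs.

(* Main.v *)
Require Import Defs.
From mathcomp Require Import all_boot all_order all_algebra.
From mathcomp Require Import lra zify.
Import Order.TTheory GRing.Theory Num.Theory.
Local Open Scope ring_scope.
Set Implicit Arguments.

Section H.
Variables (V : finType) (R : realFieldType).

Lemma xsum_chi (S W : {set V}) : xsum (chi R S) W = (#|S :&: W|)%:R.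
Proof.
rewrite /xsum /chi -natr_sum; congr (_%:R).
rewrite (eq_bigr (fun v => if v \in S then 1%N else 0%N)); last by move=> v _; case: (v \in S).
rewrite -big_mkcondr /= sum1_card; apply: eq_card => v; rewrite !inE andbC.
by [].
Qed.

Lemma stab_prop (e : rel V) (W : nat -> {set V}) (S : {set V}) (j : nat) :
  stableb e S -> (forall i, (1 <= i <= j)%N -> #|S :&: W i| = 1%N) ->
  stableb (Gseq e W j) S.
Proof.
move=> hS; elim: j => [|j IH] hW //=.
have /forallP IH' : stableb (Gseq e W j) S.
  by apply: IH => i /andP[h1 h2]; apply: hW; rewrite h1 (leq_trans h2).
have : #|S :&: W j.+1| = 1%N.
  apply: hW. rewrite /=. by [].
move/eqP/cards1P => [w hw].
have wSW : w \in S :&: W j.+1 by rewrite hw set11.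
move: wSW; rewrite inE => /andP[wS wW].
apply/forallP => u; apply/implyP => uS; apply/forallP => v; apply/implyP => vS.
rewrite /clique_proj negb_or.
have /implyP/(_ uS)/forallP/(_ v)/implyP/(_ vS) -> := IH' u.
apply/negP => /andP[_ /subsetP/(_ w wW)]; rewrite !inE => /orP[].
- by have /implyP/(_ uS)/forallP/(_ w)/implyP/(_ wS)/negP := IH' u.
- by have /implyP/(_ vS)/forallP/(_ w)/implyP/(_ wS)/negP := IH' v.
Qed.

Lemma clique_le1 (e : rel V) (S W : {set V}) :
  stableb e S -> is_clique e W -> (#|S :&: W| <= 1)%N.
Proof.
move=> /forallP hS hW; rewrite leqNgt; apply/card_gt1P => [[u [v [hu hv huv]]]].
move: hu hv; rewrite !inE => /andP[uS uW] /andP[vS vW].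
have := hW u v uW vW huv.
by have /implyP/(_ uS)/forallP/(_ v)/implyP/(_ vS)/negP := hS u.
Qed.

Lemma maxS_ge (A : {set {set V}}) (g : {set V} -> R) S :
  S \in A -> g S <= maxS A g.
Proof.
move=> hS; rewrite /maxS; case: pickP => [S0 _|h]; last by rewrite h in hS.
by rewrite (bigD1 S) //= le_max lexx.
Qed.

Lemma chi_STAB (e : rel V) S : stableb e S -> inSTAB e (chi R S).
Proof.
move=> hS; exists (fun T => (T == S)%:R); split.
- by move=> T; rewrite ler0n.
- by move=> T hT; case: eqP hT => // ->; rewrite hS.
- by rewrite (bigD1 S) //= eqxx big1 ?addr0 // => T /negbTE ->.
- move=> v; rewrite (bigD1 S) //= eqxx mul1r big1 ?addr0 // => T /negbTE ->.
  by rewrite mul0r.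
Qed.
End H.
Section H2.
Variables (V : finType) (R : realFieldType).

Lemma xsum_comb (x : V -> R) (w : {set V} -> R) W :
  (forall v, x v = \sum_S w S * chi R S v) ->
  xsum x W = \sum_S w S * xsum (chi R S) W.
Proof.
move=> hx; rewrite /xsum (eq_bigr _ (fun v _ => hx v)) exchange_big.
by apply: eq_bigr => S _; rewrite mulr_sumr.
Qed.

Lemma dotp_comb (c x : V -> R) (w : {set V} -> R) :
  (forall v, x v = \sum_S w S * chi R S v) ->
  dotp c x = \sum_S w S * dotp c (chi R S).
Proof.
move=> hx; rewrite /dotp.
under eq_bigr do rewrite hx mulr_sumr.
rewrite exchange_big; apply: eq_bigr => S _; rewrite mulr_sumr.
by apply: eq_bigr => v _; rewrite mulrCA.
Qed.

Lemma fval_comb c lam W r t (x : V -> R) (w : {set V} -> R) :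
  \sum_S w S = 1 ->
  (forall v, x v = \sum_S w S * chi R S v) ->
  fval c lam W r t x = \sum_S w S * fval c lam W r t (chi R S).
Proof.
move=> h1 hx; rewrite /fval (@dotp_comb c x w hx).
have E : forall l, lam l * (xsum x (W l) - 1) =
   \sum_S w S * (lam l * (xsum (chi R S) (W l) - 1)).
  move=> l; rewrite (@xsum_comb x w (W l) hx).
  have -> : \sum_S w S * xsum (chi R S) (W l) - 1 =
            \sum_S w S * (xsum (chi R S) (W l) - 1).
    by rewrite -[X in _ - X]h1 -sumrB; apply: eq_bigr => S _; rewrite mulrBr mulr1.
  by rewrite mulr_sumr; apply: eq_bigr => S _; rewrite mulrCA.
rewrite (eq_bigr _ (fun l _ => E l)) exchange_big -big_split /=.
by apply: eq_bigr => S _; rewrite mulrDr [w S * \sum_(_ <= _ < _) _]mulr_sumr.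
Qed.

Lemma support_lem (e : rel V) (W : nat -> {set V}) r
  (clq : forall t, (1 <= t <= r)%N -> is_clique (Gseq e W t.-1) (W t))
  (x : V -> R) (w : {set V} -> R) :
  (forall S, 0 <= w S) -> (forall S, ~~ stableb e S -> w S = 0) ->
  \sum_S w S = 1 -> (forall v, x v = \sum_S w S * chi R S v) ->
  forall t, (t <= r)%N ->
  (forall j, (1 <= j <= t)%N -> xsum x (W j) = 1) ->
  forall S, w S != 0 -> stableb e S /\
    (forall j, (1 <= j <= t)%N -> #|S :&: W j| = 1%N).
Proof.
move=> w0 wst w1 hx; elim => [|t IH] ht hxW S hS.
  split; last by move=> j /andP[h1 h2]; move: (leq_trans h1 h2).
  by apply: contraNT hS => /wst ->.
have IH' := IH (ltnW ht) (fun j hj => hxW j (let: conj a b := andP hj in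
               introT andP (conj a (leq_trans b (leqnSn t))))).
have hx1 := hxW t.+1 (leqnn _); rewrite /= in hx1.
rewrite (@xsum_comb x w (W t.+1) hx) in hx1.
have Z : \sum_S w S * (1 - (#|S :&: W t.+1|)%:R) = 0.
  under eq_bigr do rewrite mulrBr mulr1 -xsum_chi.
  by rewrite sumrB w1 hx1 subrr.
have P0 : forall T, 0 <= w T * (1 - (#|T :&: W t.+1|)%:R).
  move=> T; have [->|hT] := eqVneq (w T) 0; first by rewrite mul0r.
  apply: mulr_ge0 => //; rewrite subr_ge0 lern1.
  have [sT hT'] := IH' T hT.
  have sG : stableb (Gseq e W t) T by apply: stab_prop.
  apply: clique_le1 sG _.
  by have := clq t.+1; rewrite ht /=; apply.
have := psumr_eq0P (fun T _ => P0 T) Z (i:=S) isT.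
move/eqP; rewrite mulf_eq0 (negbTE hS) /= subr_eq0 eq_sym pnatr_eq1 => /eqP h.
have [sS hS'] := IH' S hS; split => // j /andP[j1]; rewrite leq_eqVlt => /orP[/eqP[->]//|].
by rewrite ltnS => jt; apply: hS'; rewrite j1.
Qed.
End H2.
Unset Implicit Arguments.
Theorem lemma6 (V : finType) (R : realFieldType) (e : rel V)
    (r : nat) (W : nat -> {set V}) (c : V -> R) (d : R) (lam : nat -> R) :
  simple_graph e ->
  (* W_1, ..., W_r are distinct *)
  {in [pred i : nat | (1 <= i <= r)%N] &, injective W} ->
  (* W_t is a clique of G_{t-1} with |W_t| >= 2 *)
  (forall t, (1 <= t <= r)%N ->
     is_clique (Gseq e W t.-1) (W t) /\ (2 <= #|W t|)%N) ->
  (* c^T x <= d is valid for STAB(G_r) *)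
  (forall x, inSTAB (Gseq e W r) x -> dotp c x <= d) ->
  (* lambda^S_l = max { f_l(x) - d | x in S_{l-1}, x_{W_l} = 0 }, max of empty = 0 *)
  (forall l, (1 <= l <= r)%N ->
     lam l = maxS (lam_domain R e W l) (fun S => fval c lam W r l (chi R S) - d)) ->
  forall t, (t <= r)%N ->
  forall x : V -> R, inF e W t x -> fval c lam W r t x <= d.
Proof.
move=> _ _ clq valid lamdef.
have clq' : forall t, (1 <= t <= r)%N -> is_clique (Gseq e W t.-1) (W t).
  by move=> t /clq[].
have P : forall n, (n <= r)%N -> forall S, stableb e S ->
    (forall j, (1 <= j <= r - n)%N -> #|S :&: W j| = 1%N) ->
    fval c lam W r (r - n)%N (chi R S) <= d.
  elim => [|n IH] hn S sS hS.
    rewrite subn0 /fval big_geq // addr0; apply: valid; apply: chi_STAB.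
    by apply: stab_prop sS _; rewrite subn0 in hS.
  set t := (r - n.+1)%N.
  have tr : t.+1 = (r - n)%N by rewrite /t subnSK.
  have ht : (t < r)%N by rewrite /t; move: hn; clear; lia.
  have split : forall y, fval c lam W r t y =
      fval c lam W r t.+1 y + lam t.+1 * (xsum y (W t.+1) - 1).
    by move=> y; rewrite /fval big_ltn ?ltnS // addrA addrAC.
  have hSt : forall j, (1 <= j <= t)%N -> #|S :&: W j| = 1%N.
    by move=> j /andP[j1 j2]; apply: hS; rewrite j1 /= (leq_trans j2).
  have sGt : stableb (Gseq e W t) S by apply: stab_prop sS hSt.
  have hle : (#|S :&: W t.+1| <= 1)%N.
    by apply: clique_le1 sGt _; have := clq' t.+1; rewrite ht; apply.
  rewrite split xsum_chi.
  move: hle; rewrite leq_eqVlt ltnS leqn0 => /orP[/eqP h1|/eqP h0].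
    rewrite h1 subrr mulr0 addr0 tr; apply: IH sS _; first exact: ltnW.
    move=> j /andP[j1]; rewrite -tr leq_eqVlt => /orP[/eqP->//|jt].
    by apply: hSt; rewrite j1 -ltnS.
  have hdom : S \in lam_domain R e W t.+1.
    rewrite inE; apply/andP; split; first exact: sS.
    apply/andP; split.
      apply/forallP => j; apply/implyP => j1; rewrite xsum_chi pnatr_eq1.
      by apply/eqP; apply: hSt; rewrite j1 -ltnS ltn_ord.
    by rewrite xsum_chi h0.
  have := @maxS_ge V R _ (fun S => fval c lam W r t.+1 (chi R S) - d) S hdom.
  rewrite -lamdef ?ht // h0 => hl; lra.
move=> t ht x [[w [w0 wst w1 hx]] hxW].
rewrite (fval_comb c lam W r t x w w1 hx).
have supp := support_lem e W r clq' w w0 wst w1 hx t ht hxW.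
rewrite -[d]mul1r -w1 mulr_suml; apply: ler_sum => S _.
have [->|hS] := eqVneq (w S) 0; first by rewrite !mul0r.
apply: ler_wpM2l => //; have [sS hS'] := supp S hS.
have := P (r - t)%N (leq_subr _ _) S sS; rewrite subKn //; apply; exact: hS'.
Qed.
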